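(* Let $A$ be a primitive axial algebra of Jordan type $\eta$, and let $\mathcal A$ be a set of $\eta$-axes generating $A$ such that the graph $\Delta_{\mathcal A}$ is connected. Suppose there are distinct $a,b\in\mathcal A$ with $\tau(a)=\tau(b)\ne\mathrm{id}$. Then $\eta=\tfrac12$, $a+b$ is the identity element of $A$, and $A$ is a Jordan algebra of Clifford type, i.e. $A\cong J(V,B)$ for some $\mathbb F$-vector space $V$ with symmetric bilinear form $B$.
   Context: Throughout, $\mathbb F$ is a field of characteristic $\neq 2$ and $\eta\in\mathbb F\setminus\{0,1\}$. Let $A$ be a commutative, not necessarily associative $\mathbb F$-algebra. For $a\in A$ and $\lambda\in\mathbb F$ put $A_\lambda(a)=\{x\in A: xa=\lambda x\}$. An $\eta$-axis of $A$ is an element $a$ with $a^2=a$ such that $A=A_1(a)\oplus A_0(a)\oplus A_\eta(a)$, $A_1(a)=\mathbb F a$, and, writing $A_+(a)=A_1(a)\oplus A_0(a)$ and $A_-(a)=A_\eta(a)$, one has $A_+(a)A_+(a)\subseteq A_+(a)$, $A_+(a)A_-(a)\subseteq A_-(a)$, $A_-(a)A_-(a)\subseteq A_+(a)$ and $A_0(a)A_0(a)\subseteq A_0(a)$. $A$ is a primitive axial algebra of Jordan type $\eta$ if it is generated as an algebra by $\eta$-axes. For an $\eta$-axis $a$, the Miyamoto involution $\tau(a)$ is the automorphism of $A$ acting as the identity on $A_+(a)$ and as $-1$ on $A_-(a)$. For a set $\mathcal B$ of $\eta$-axes, $\Delta_{\mathcal B}$ is the graph with vertex set $\mathcal B$ in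 which distinct $x,y$ are adjacent iff $xy\neq 0$. For a symmetric bilinear form $B$ on an $\mathbb F$-vector space $V$, $J(V,B)$ is the algebra $\mathbb F\mathbf e\oplus V$ with product $(\alpha\mathbf e+u)(\beta\mathbf e+v)=(\alpha\beta+B(u,v))\mathbf e+\alpha v+\beta u$. *)

(* Defs.v *)
From HB Require Import structures.
From mathcomp Require Import all_boot all_order all_algebra.
Set Implicit Arguments. Unset Strict Implicit. Unset Printing Implicit Defensive.
Import Order.TTheory GRing.Theory Num.Theory.
Local Open Scope ring_scope.

Section Axial.
Variables (F : fieldType) (A : lmodType F) (mul : A -> A -> A).

Definition comm_algebra : Prop :=
  (forall (k : F) (x y z : A), mul (k *: x + y) z = k *: mul x z + mul y z) /\
  (forall x y : A, mul x y = mul y x).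

Definition eigsp (a : A) (l : F) (x : A) : Prop := mul x a = l *: x.

Definition Aplus (a : A) (x : A) : Prop :=
  exists u v, eigsp a 1 u /\ eigsp a 0 v /\ x = u + v.

Definition Aminus (eta : F) (a : A) (x : A) : Prop := eigsp a eta x.

Definition is_axis (eta : F) (a : A) : Prop :=
  mul a a = a /\
  (forall x, exists x1 x0 xe, eigsp a 1 x1 /\ eigsp a 0 x0 /\ eigsp a eta xe /\
        x = x1 + x0 + xe) /\
  (forall x1 x0 xe, eigsp a 1 x1 -> eigsp a 0 x0 -> eigsp a eta xe ->
        x1 + x0 + xe = 0 -> x1 = 0 /\ x0 = 0 /\ xe = 0) /\
  (forall x, eigsp a 1 x <-> exists k : F, x = k *: a) /\
  (forall x y, Aplus a x -> Aplus a y -> Aplus a (mul x y)) /\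
  (forall x y, Aplus a x -> Aminus eta a y -> Aminus eta a (mul x y)) /\
  (forall x y, Aminus eta a x -> Aminus eta a y -> Aplus a (mul x y)) /\
  (forall x y, eigsp a 0 x -> eigsp a 0 y -> eigsp a 0 (mul x y)).

(* f is the Miyamoto involution tau(a): the linear map acting as id on A_+(a)
   and as -1 on A_-(a) (it is uniquely determined by these properties). *)
Definition is_tau (eta : F) (a : A) (f : A -> A) : Prop :=
  (forall (k : F) x y, f (k *: x + y) = k *: f x + f y) /\
  (forall x, Aplus a x -> f x = x) /\
  (forall x, Aminus eta a x -> f x = - x).

Definition subalg (P : A -> Prop) : Prop :=
  P 0 /\ (forall (k : F) x y, P x -> P y -> P (k *: x + y)) /\
  (forall x y, P x -> P y -> P (mul x y)).

Definition generates (S : A -> Prop) : Prop :=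
  forall P : A -> Prop, subalg P -> (forall x, S x -> P x) -> forall x, P x.

Definition adj (x y : A) : Prop := x <> y /\ mul x y <> 0.

Inductive graph_path (S : A -> Prop) : A -> A -> Prop :=
| gp_refl x : S x -> graph_path S x x
| gp_step x y z : S x -> adj x y -> graph_path S y z -> graph_path S x z.

Definition graph_connected (S : A -> Prop) : Prop :=
  forall x y, S x -> S y -> graph_path S x y.

End Axial.

(* The Jordan algebra of Clifford type J(V,B) = F e (+) V, modelled on F * V *)
Definition jmul (F : fieldType) (V : lmodType F) (B : V -> V -> F)
  (p q : F * V) : F * V :=
  (p.1 * q.1 + B p.2 q.2, p.1 *: q.2 + q.1 *: p.2).

Definition symbilin (F : fieldType) (V : lmodType F) (B : V -> V -> F) : Prop :=
  (forall (k : F) u v w, B (k *: u + v) w = k * B u w + B v w) /\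
  (forall u v, B u v = B v u).

Definition iso_J (F : fieldType) (A : lmodType F) (mul : A -> A -> A)
  (V : lmodType F) (B : V -> V -> F) (phi : A -> F * V) : Prop :=
  bijective phi /\
  (forall (k : F) x y,
      phi (k *: x + y) = (k * (phi x).1 + (phi y).1, k *: (phi x).2 + (phi y).2)) /\
  (forall x y, phi (mul x y) = jmul B (phi x) (phi y)).

(* Main.v *)
Require Import Defs.
From HB Require Import structures.
From mathcomp Require Import all_boot all_order all_algebra.
From mathcomp Require Import ring.
From Stdlib Require Import ClassicalEpsilon.
Import GRing.Theory.
Local Open Scope ring_scope.
Set Implicit Arguments. Unset Strict Implicit. Unset Printing Implicit Defensive.

Section Sq.
Variables (F : fieldType) (A : lmodType F).
Definition sqz : Type := (F * A)%type.
HB.instance Definition _ := GRing.Zmodule.on sqz.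
Definition sqone : sqz := (1, 0).
Definition sqmul (p q : sqz) : sqz := (p.1 * q.1, p.1 *: q.2 + q.1 *: p.2).
Fact sqmulA : associative sqmul.
Proof. move=> [a u] [b v] [c w]; rewrite /sqmul /=; congr pair; first by rewrite mulrA.
rewrite !scalerDr !scalerA [c * a]mulrC [c * b]mulrC.
rewrite -!addrA; congr (_ + _); rewrite addrC -addrA; congr (_ + _); by rewrite addrC. Qed.
Fact sqmulC : commutative sqmul.
Proof. by move=> [a u] [b v]; rewrite /sqmul /= mulrC addrC. Qed.
Fact sqmul1 : left_id sqone sqmul.
Proof. by move=> [a u]; rewrite /sqmul /= mul1r scale1r scaler0 addr0. Qed.
Fact sqmulD : left_distributive sqmul +%R.
Proof. move=> [a u] [b v] [c w]; rewrite /sqmul /=. 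
congr pair; first by rewrite mulrDl.
by rewrite scalerDl scalerDr !addrA; congr (_ + _); rewrite -!addrA; congr (_ + _); rewrite addrC. Qed.
Fact sqone_neq0 : sqone != 0.
Proof. by apply/eqP => -[] /eqP; rewrite oner_eq0. Qed.
HB.instance Definition _ := GRing.Zmodule_isComNzRing.Build sqz sqmulA sqmulC sqmul1 sqmulD sqone_neq0.
Definition iv (v : A) : sqz := (0, v).
Definition ik (k : F) : sqz := (k, 0).
Lemma ivD u v : iv (u + v) = iv u + iv v. Proof. by rewrite /iv; congr pair; rewrite addr0. Qed.
Lemma ivN u : iv (- u) = - iv u. Proof. by rewrite /iv; congr pair; rewrite oppr0. Qed.
Lemma ivB u v : iv (u - v) = iv u - iv v. Proof. by rewrite ivD ivN. Qed.
Lemma iv0 : iv 0 = 0. Proof. by []. Qed.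
Lemma ivZ k u : iv (k *: u) = ik k * iv u.
Proof. have -> : ik k * iv u = sqmul (ik k) (iv u) by []. by rewrite /sqmul /iv /ik /= mulr0 scaler0 addr0. Qed.
Lemma ikD k l : ik (k + l) = ik k + ik l. Proof. by rewrite /ik; congr pair; rewrite addr0. Qed.
Lemma ikM k l : ik (k * l) = ik k * ik l.
Proof. have -> : ik k * ik l = sqmul (ik k) (ik l) by []. by rewrite /sqmul /ik /= !scaler0 addr0. Qed.
Lemma ikN k : ik (- k) = - ik k. Proof. by rewrite /ik; congr pair; rewrite oppr0. Qed.
Lemma ikB k l : ik (k - l) = ik k - ik l. Proof. by rewrite ikD ikN. Qed.
Lemma ik1 : ik 1 = 1. Proof. by []. Qed.
Lemma ik0 : ik 0 = 0. Proof. by []. Qed.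
Lemma ikn n : ik n%:R = n%:R.
Proof. elim: n => [|n IH] //; by rewrite !mulrS ikD IH. Qed.
Lemma iv_inj : injective iv. Proof. by move=> u v [] . Qed.
End Sq.

Ltac lin := apply: iv_inj; rewrite ?(ivD, ivB, ivN, ivZ, iv0, ikM, ikD, ikB, ikN, ik1, ik0, ikn); ring.


Record linF (F : fieldType) (A : lmodType F) := LinF {
  lf : A -> F; lfP : forall k x y, lf (k *: x + y) = k * lf x + lf y }.
Section Ker.
Variables (F : fieldType) (A : lmodType F) (L : linF A).
Definition kerp : {pred A} := fun x => lf L x == 0.
Fact kerp_closed : GRing.submod_closed kerp.
Proof.
split.
  by rewrite unfold_in /=; have := lfP L (-1) 0 0; rewrite scaler0 addr0 mulN1r addNr => ->.
move=> k u v; rewrite !unfold_in /= lfP => /eqP -> /eqP ->. by rewrite mulr0 addr0.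
Qed.
HB.instance Definition _ := GRing.isSubmodClosed.Build F A kerp kerp_closed.
Record kerT := KerT { kval : A; kvalP : kval \in kerp }.
HB.instance Definition _ := [isSub for kval].
HB.instance Definition _ := [Choice of kerT by <:].
HB.instance Definition _ := [SubChoice_isSubLmodule of kerT by <:].
Lemma kvalD (x y : kerT) : kval (x + y) = kval x + kval y.
Proof. by []. Qed.
Lemma kvalZ k (x : kerT) : kval (k *: x) = k *: kval x.
Proof. by []. Qed.
Lemma kval_inj : injective kval. Proof. exact: val_inj. Qed.
Lemma kval0 (x : kerT) : lf L (kval x) = 0.
Proof. by have := kvalP x; rewrite unfold_in /= => /eqP. Qed.
End Ker.

Section Main.
Variables (F : fieldType) (A : lmodType F) (mul : A -> A -> A) (eta : F).
Hypothesis H2 : (2%:R : F) != 0.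
Hypothesis He0 : eta != 0.
Hypothesis He1 : eta != 1.
Hypothesis Hc : comm_algebra mul.

Lemma mulC x y : mul x y = mul y x. Proof. exact: Hc.2. Qed.
Lemma mul0l x : mul 0 x = 0.
Proof. have := Hc.1 1 0 0 x; rewrite scale1r addr0 scale1r.
by move=> /(congr1 (fun v => v - mul 0 x)); rewrite subrr addrK => <-. Qed.
Lemma mulDl x y z : mul (x + y) z = mul x z + mul y z.
Proof. by have := Hc.1 1 x y z; rewrite !scale1r. Qed.
Lemma mulZl k x z : mul (k *: x) z = k *: mul x z.
Proof. by have := Hc.1 k x 0 z; rewrite !addr0 mul0l addr0. Qed.
Lemma mulNl x z : mul (- x) z = - mul x z.
Proof. by rewrite -scaleN1r mulZl scaleN1r. Qed.
Lemma mulBl x y z : mul (x - y) z = mul x z - mul y z.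
Proof. by rewrite mulDl mulNl. Qed.
Lemma mul0r x : mul x 0 = 0. Proof. by rewrite mulC mul0l. Qed.
Lemma mulDr x y z : mul z (x + y) = mul z x + mul z y.
Proof. by rewrite mulC mulDl !(mulC z). Qed.
Lemma mulZr k x z : mul z (k *: x) = k *: mul z x.
Proof. by rewrite mulC mulZl mulC. Qed.
Lemma mulNr x z : mul z (- x) = - mul z x.
Proof. by rewrite mulC mulNl mulC. Qed.
Lemma mulBr x y z : mul z (x - y) = mul z x - mul z y.
Proof. by rewrite mulDr mulNr. Qed.

Ltac mexp := rewrite ?(mulDl, mulDr, mulZl, mulZr, mulNl, mulNr, mulBl, mulBr, mul0l, mul0r).

Ltac mexpin H := rewrite ?(mulDl, mulDr, mulZl, mulZr, mulNl, mulNr, mulBl, mulBr, mul0l, mul0r) in H.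

Local Notation eig := (eigsp mul).
Local Notation axis := (is_axis mul eta).

Lemma eig_lin x l k u v : eig x l u -> eig x l v -> eig x l (k *: u + v).
Proof. rewrite /eigsp => hu hv; mexp; rewrite hu hv; lin. Qed.
Lemma eig0 x l : eig x l 0. Proof. by rewrite /eigsp mul0l scaler0. Qed.
Lemma eigD x l u v : eig x l u -> eig x l v -> eig x l (u + v).
Proof. by move=> hu hv; have := eig_lin 1 hu hv; rewrite scale1r. Qed.
Lemma eigZ x l k u : eig x l u -> eig x l (k *: u).
Proof. by move=> hu; have := eig_lin k hu (eig0 x l); rewrite addr0. Qed.
Lemma eigN x l u : eig x l u -> eig x l (- u).
Proof. by move=> hu; rewrite -scaleN1r; apply: eigZ. Qed.
Lemma eigB x l u v : eig x l u -> eig x l v -> eig x l (u - v).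
Proof. by move=> hu hv; apply: eigD => //; apply: eigN. Qed.


Lemma scal_inj (x : A) k l : x != 0 -> k *: x = l *: x -> k = l.
Proof. move=> hx /eqP; rewrite -subr_eq0 -scalerBl scaler_eq0 (negbTE hx) orbF subr_eq0. by move/eqP. Qed.

Lemma ax_idem x : axis x -> mul x x = x. Proof. by case. Qed.
Lemma ax_x1 x : axis x -> eig x 1 x. Proof. by move=> hx; rewrite /eigsp scale1r ax_idem. Qed.
Lemma ax_dec x : axis x -> forall y, exists k y0 yn, eig x 0 y0 /\ eig x eta yn /\ y = k *: x + y0 + yn.
Proof.
case=> _ [hd [_ [h1 _]]] y; case: (hd y) => [y1 [y0 [ye [e1 [e0 [ee ->]]]]]].
by case: (proj1 (h1 y1) e1) => k ->; exists k, y0, ye.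
Qed.
Lemma ax_uniq0 x : axis x -> forall k u0 un, eig x 0 u0 -> eig x eta un ->
  k *: x + u0 + un = 0 -> k *: x = 0 /\ u0 = 0 /\ un = 0.
Proof.
move=> hx k u0 un h0 hn e; have hx' := hx; case: hx' => _ [_ [hdir _]].
by apply: hdir => //; apply: eigZ; apply: ax_x1.
Qed.
Lemma ax_uniq x : axis x -> forall k u0 un l v0 vn, eig x 0 u0 -> eig x eta un ->
  eig x 0 v0 -> eig x eta vn ->
  k *: x + u0 + un = l *: x + v0 + vn -> k *: x = l *: x /\ u0 = v0 /\ un = vn.
Proof.
move=> hx k u0 un l v0 vn hu0 hun hv0 hvn e.
have : (k - l) *: x + (u0 - v0) + (un - vn) = 0.
  have -> : (k - l) *: x + (u0 - v0) + (un - vn) = (k *: x + u0 + un) - (l *: x + v0 + vn) by lin.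
  by rewrite e subrr.
case/(ax_uniq0 hx); try by apply: eigB.
move=> /eqP h1 [/eqP h2 /eqP h3]; move: h1 h2 h3; rewrite scalerBl !subr_eq0.
by move=> /eqP -> /eqP -> /eqP ->.
Qed.
Lemma ax_uniqk x : axis x -> x != 0 -> forall k u0 un l v0 vn, eig x 0 u0 -> eig x eta un ->
  eig x 0 v0 -> eig x eta vn ->
  k *: x + u0 + un = l *: x + v0 + vn -> k = l /\ u0 = v0 /\ un = vn.
Proof.
move=> hx hx0 k u0 un l v0 vn hu0 hun hv0 hvn e.
case: (ax_uniq hx hu0 hun hv0 hvn e) => h1 h2; split => //; exact: scal_inj hx0 h1.
Qed.

Lemma ax_mulx x : axis x -> forall k y0 yn, eig x 0 y0 -> eig x eta yn ->
  mul x (k *: x + y0 + yn) = k *: x + eta *: yn.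
Proof.
move=> hx k y0 yn h0 hn; mexp; rewrite ax_idem // (mulC x y0) h0 (mulC x yn) hn; lin.
Qed.

Lemma Aplus_of x k u0 : axis x -> eig x 0 u0 -> Aplus mul x (k *: x + u0).
Proof. move=> hx h0; exists (k *: x), u0; split => //; apply: eigZ; exact: ax_x1. Qed.

Lemma Aplus_dec x u : axis x -> Aplus mul x u -> exists k u0, eig x 0 u0 /\ u = k *: x + u0.
Proof.
case=> _ [_ [_ [h1 _]]] [u1 [u0 [e1 [e0 ->]]]].
by case: (proj1 (h1 u1) e1) => k ->; exists k, u0.
Qed.

Lemma f00 x u v : axis x -> eig x 0 u -> eig x 0 v -> eig x 0 (mul u v).
Proof. by case=> _ [_ [_ [_ [_ [_ [_ h]]]]]]; apply: h. Qed.
Lemma fpn x k u0 v : axis x -> eig x 0 u0 -> eig x eta v -> eig x eta (mul (k *: x + u0) v).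
Proof.
move=> hx h0 hv; have hx' := hx; case: hx' => _ [_ [_ [_ [_ [h _]]]]].
by apply: h => //; apply: Aplus_of.
Qed.
Lemma f0n x u v : axis x -> eig x 0 u -> eig x eta v -> eig x eta (mul u v).
Proof. by move=> hx hu hv; have := fpn 0 hx hu hv; rewrite scale0r add0r. Qed.
Lemma fnn x u v : axis x -> eig x eta u -> eig x eta v -> exists k w, eig x 0 w /\ mul u v = k *: x + w.
Proof.
move=> hx hu hv; have hx' := hx; case: hx' => _ [_ [_ [_ [_ [_ [h _]]]]]].
by apply: Aplus_dec => //; apply: h.
Qed.
Lemma fpm x u v : axis x -> Aplus mul x u -> eig x eta v -> eig x eta (mul u v).
Proof. by move=> hx; case/(Aplus_dec hx) => k [u0 [h0 ->]]; apply: fpn. Qed.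
Lemma fmm x u v : axis x -> eig x eta u -> eig x eta v -> Aplus mul x (mul u v).
Proof. by case=> _ [_ [_ [_ [_ [_ [h _]]]]]]; apply: h. Qed.

Lemma ax_one x y : axis y -> x != 0 -> mul x x = x -> eig y 1 x -> x = y.
Proof.
move=> hy hx0 hxx e; have hy' := hy; case: hy' => _ [_ [_ [h1 _]]].
case: (proj1 (h1 x) e) => k ex.
have hk : k != 0 by apply: contraNneq hx0 => hk; rewrite ex hk scale0r.
have hy0 : y != 0 by apply: contraNneq hx0 => hy0; rewrite ex hy0 scaler0.
move: hxx; rewrite ex mulZl mulZr ax_idem // scalerA => /(scal_inj hy0).
move=> /(congr1 (fun t => t / k)) /=; rewrite mulfK // divff // => hk1.
by rewrite hk1 scale1r.
Qed.

Lemma AF y x : axis y -> forall psi x0 xn, eig y 0 x0 -> eig y eta xn -> x = psi *: y + x0 + xn ->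
  mul y (mul y x) - eta *: mul y x = ((1 - eta) * psi) *: y.
Proof.
move=> hy psi x0 xn h0 hn ->; rewrite ax_mulx //.
mexp; rewrite ax_idem // (mulC y xn) hn; lin.
Qed.

Lemma seress x k u0 y : axis x -> eig x 0 u0 ->
  mul x (mul (k *: x + u0) y) = mul (k *: x + u0) (mul x y).
Proof.
move=> hx h0; case: (ax_dec hx y) => l [y0 [yn [hy0 [hyn ->]]]].
rewrite ax_mulx //.
have e1 : mul u0 x = 0 by rewrite h0 scale0r.
have e2 : eig x 0 (mul u0 y0) by apply: f00.
have e3 : eig x eta (mul u0 yn) by apply: f0n.
mexp; rewrite !ax_idem // (mulC x y0) hy0 (mulC x yn) hyn e1 (mulC x (mul u0 y0)) e2.
rewrite (mulC x (mul u0 yn)) e3; mexp; rewrite (mulC x yn) hyn; lin.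
Qed.


Local Notation h := (2%:R^-1 : F).

Lemma PH x y : axis x -> axis y -> x != 0 ->
 forall phi y0 yn psi x0 xn, eig x 0 y0 -> eig x eta yn -> y = phi *: x + y0 + yn ->
   eig y 0 x0 -> eig y eta xn -> x = psi *: y + x0 + xn ->
 [/\ phi ^+ 2 = phi * psi,
     (eta * (phi + h - eta)) *: yn = ((1 - eta) * psi) *: yn,
     eta *: (y0 - mul y0 y0) = ((1 - eta) * psi) *: y0,
     mul y0 yn = (h - phi * eta) *: yn &
     mul yn yn = (phi - phi ^+ 2) *: x + (y0 - mul y0 y0)].
Proof.
move=> hx hy hx0 phi y0 yn psi x0 xn hy0 hyn ey hx0' hxn ex.
case: (fnn hx hyn hyn) => mu [u0 [hu0 enn]].
have hs00 : eig x 0 (mul y0 y0) := f00 hx hy0 hy0.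
have hs0n : eig x eta (mul y0 yn) := f0n hx hy0 hyn.
have E : mul y y = (phi^+2 + mu) *: x + (mul y0 y0 + u0) + ((2%:R*phi*eta) *: yn + 2%:R *: mul y0 yn).
  rewrite ey; mexp; rewrite ax_idem // (mulC x y0) hy0 (mulC x yn) hyn (mulC yn y0) enn; lin.
move: E; rewrite ax_idem // {1}ey => E.
case: (ax_uniqk hx hx0 hy0 hyn _ _ E); try by (apply: eigD; try apply: eigZ).
move=> Ephi [Ey0 Eyn].
have Ed : mul y0 yn = (h - phi * eta) *: yn.
  have -> : mul y0 yn = h *: (2%:R *: mul y0 yn) by rewrite scalerA mulVf // scale1r.
  have -> : 2%:R *: mul y0 yn = yn - (2%:R*phi*eta) *: yn.
    by move: Eyn => /(congr1 (fun v => v - (2%:R*phi*eta) *: yn)) /=; rewrite addrAC subrr add0r => <-.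
  have -> : h *: (yn - (2%:R*phi*eta) *: yn) = (h * (1 - 2%:R*phi*eta)) *: yn by lin.
  by congr (_ *: _); field.
have Emu : mu = phi - phi^+2 by rewrite {1}Ephi; ring.
have Eu0 : u0 = y0 - mul y0 y0 by rewrite {1}Ey0 addrAC subrr add0r.
have Ee : mul yn yn = (phi - phi ^+ 2) *: x + (y0 - mul y0 y0) by rewrite enn Emu Eu0.
have Exy : mul y x = phi *: x + eta *: yn by rewrite mulC {1}ey ax_mulx.
have Eyyn : mul y yn = (phi*eta) *: yn + mul y0 yn + mul yn yn.
  rewrite mulC {1}ey; mexp; rewrite hyn (mulC yn y0); lin.
have AFe := AF hy hx0' hxn ex.
rewrite Exy in AFe; mexpin AFe; rewrite Exy Eyyn Ed Ee in AFe.
set K1 := phi*phi + eta*(phi - phi^+2) - eta*phi.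
set K3 := phi*eta + eta*(phi*eta) + eta*(h - phi*eta) - eta*eta.
have AF2 : K1 *: x + eta *: (y0 - mul y0 y0) + K3 *: yn =
   (((1-eta)*psi)*phi) *: x + ((1-eta)*psi) *: y0 + ((1-eta)*psi) *: yn.
  have -> : (((1-eta)*psi)*phi) *: x + ((1-eta)*psi) *: y0 + ((1-eta)*psi) *: yn =
     ((1-eta)*psi) *: (phi *: x + y0 + yn) by lin.
  rewrite -ey -AFe /K1 /K3; mexp; lin.
case: (ax_uniqk hx hx0 _ _ _ _ AF2); try by (apply: eigZ; try apply: eigB).
move=> EK1 [E0 EK3].
have hne : 1 - eta != 0 by rewrite subr_eq0 eq_sym.
split => //.
- apply: (mulfI hne); rewrite -[LHS](_ : K1 = _); last by rewrite /K1; ring.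
  by rewrite EK1; ring.
- by rewrite -EK3 /K3; congr (_ *: _); ring.
Qed.


Lemma PF x y : axis x -> axis y -> x != 0 -> y != 0 ->
 forall phi y0 yn psi x0 xn, eig x 0 y0 -> eig x eta yn -> y = phi *: x + y0 + yn ->
   eig y 0 x0 -> eig y eta xn -> x = psi *: y + x0 + xn ->
 [/\ phi = psi,
     (eta * (phi + h - eta)) *: yn = ((1 - eta) * phi) *: yn,
     eta *: (y0 - mul y0 y0) = ((1 - eta) * phi) *: y0,
     mul y0 yn = (h - phi * eta) *: yn &
     mul yn yn = (phi - phi ^+ 2) *: x + (y0 - mul y0 y0)].
Proof.
move=> hx hy hx0 hy0 phi y0 yn psi x0 xn h1 h2 e1 h3 h4 e2.
case: (PH hx hy hx0 h1 h2 e1 h3 h4 e2) => E1 Eb Ec Ed Ee.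
case: (PH hy hx hy0 h3 h4 e2 h1 h2 e1) => E2 _ _ _ _.
have Ep : phi = psi.
  have : (phi - psi) ^+ 2 = 0.
    have -> : (phi - psi) ^+ 2 = phi^+2 - 2%:R * (phi * psi) + psi^+2 by ring.
    by rewrite E1 E2; ring.
  by move/eqP; rewrite expf_eq0 /= subr_eq0 => /eqP.
by rewrite -Ep in Eb Ec; split.
Qed.

Variables (S : A -> Prop) (a b : A) (f : A -> A).
Hypothesis HS : forall x, S x -> axis x.
Hypothesis Hgen : generates mul S.
Hypothesis Hconn : graph_connected mul S.
Hypothesis Sa : S a.
Hypothesis Sb : S b.
Hypothesis Hab : a <> b.
Hypothesis Hfa : is_tau mul eta a f.
Hypothesis Hfb : is_tau mul eta b f.
Hypothesis Hfx : exists x, f x <> x.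

Lemma fadd x p q : is_tau mul eta x f -> f (p + q) = f p + f q.
Proof. by case=> hl _; have := hl 1 p q; rewrite !scale1r. Qed.

Lemma tau_val x k u0 un : axis x -> is_tau mul eta x f -> eig x 0 u0 -> eig x eta un ->
  f (k *: x + u0 + un) = k *: x + u0 - un.
Proof.
move=> hx ht h0 hn; rewrite (fadd _ _ ht); have ht' := ht; case: ht' => _ [hp hm].
by rewrite hp ?hm //; apply: Aplus_of.
Qed.

Lemma two_eq0 (w : A) : 2%:R *: w = 0 -> w = 0.
Proof. by move/eqP; rewrite scaler_eq0 (negbTE H2) /= => /eqP. Qed.

Lemma minus_transfer x1 x2 v : axis x1 -> axis x2 -> is_tau mul eta x1 f -> is_tau mul eta x2 f ->
  eig x1 eta v -> eig x2 eta v.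
Proof.
move=> hx1 hx2 ht1 ht2 hv.
case: (ax_dec hx2 v) => k [v0 [vn [h0 [hn ev]]]].
have E1 : f v = - v by case: ht1 => _ [_ ->].
have E2 := tau_val k hx2 ht2 h0 hn; rewrite -ev E1 {1}ev in E2.
have : 2%:R *: (k *: x2 + v0) = 0.
  have -> : 2%:R *: (k *: x2 + v0) = (k *: x2 + v0 - vn) - (- (k *: x2 + v0 + vn)) by lin.
  by rewrite E2 subrr.
by move/two_eq0 => e; rewrite ev e add0r.
Qed.

Lemma plus_transfer x1 x2 v : axis x1 -> axis x2 -> is_tau mul eta x1 f -> is_tau mul eta x2 f ->
  Aplus mul x1 v -> Aplus mul x2 v.
Proof.
move=> hx1 hx2 ht1 ht2 hv.
case: (ax_dec hx2 v) => k [v0 [vn [h0 [hn ev]]]].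
have E1 : f v = v by case: ht1 => _ [hp _]; apply: hp.
have E2 := tau_val k hx2 ht2 h0 hn; rewrite -ev E1 {1}ev in E2.
have : 2%:R *: vn = 0.
  have -> : 2%:R *: vn = (k *: x2 + v0 + vn) - (k *: x2 + v0 - vn) by lin.
  by rewrite E2 subrr.
by move/two_eq0 => e; rewrite ev e addr0; apply: Aplus_of.
Qed.

Lemma tau_nz x : axis x -> is_tau mul eta x f -> x != 0.
Proof.
move=> hx ht; apply/eqP => ex; case: Hfx => v; apply.
case: (ax_dec hx v) => k [v0 [vn [h0 [hn ev]]]].
have vn0 : vn = 0.
  move: hn; rewrite /eigsp ex mul0r => /esym/eqP; rewrite scaler_eq0 (negbTE He0) /=.
  by move/eqP.
by rewrite ev (tau_val k hx ht h0 hn) vn0 subr0 addr0.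
Qed.

Lemma orth x1 x2 : axis x1 -> axis x2 -> is_tau mul eta x1 f -> is_tau mul eta x2 f ->
  x1 <> x2 -> mul x1 x2 = 0.
Proof.
move=> hx1 hx2 ht1 ht2 hne.
have x10 := tau_nz hx1 ht1.
have : Aplus mul x1 x2.
  apply: (plus_transfer hx2 hx1 ht2 ht1); have := Aplus_of 1 hx2 (eig0 x2 0).
  by rewrite addr0 scale1r.
case/(Aplus_dec hx1) => l [b0 [hb0 eb]].
have Em : mul x1 x2 = l *: x1.
  by rewrite eb; mexp; rewrite ax_idem // (mulC x1 b0) hb0 scale0r addr0.
have [l0|hl] := eqVneq l 0; first by rewrite Em l0 scale0r.
have E : l *: x1 + b0 + 0 = (l * l) *: x1 + mul b0 b0 + 0.
  rewrite !addr0 -eb -{1}(ax_idem hx2) {1 2}eb; mexp; rewrite ax_idem // (mulC x1 b0) hb0; lin.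
case: (ax_uniqk hx1 x10 hb0 (eig0 _ _) (f00 hx1 hb0 hb0) (eig0 _ _) E) => El _.
have l1 : l = 1.
  by move: El => /(congr1 (fun t => t / l)) /=; rewrite mulfK // divff.
exfalso; apply: hne; apply: (ax_one hx2 x10 (ax_idem hx1)).
by rewrite /eigsp Em l1 scale1r.
Qed.


Lemma ha : axis a. Proof. exact: HS. Qed.
Lemma hb : axis b. Proof. exact: HS. Qed.
Lemma a0 : a != 0. Proof. exact: tau_nz ha Hfa. Qed.
Lemma b0 : b != 0. Proof. exact: tau_nz hb Hfb. Qed.
Lemma ab0 : mul a b = 0. Proof. exact: orth ha hb Hfa Hfb Hab. Qed.
Lemma ba0 : mul b a = 0. Proof. by rewrite mulC ab0. Qed.
Lemma eig_ab : eig a 0 b. Proof. by rewrite /eigsp ba0 scale0r. Qed.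
Lemma eig_ba : eig b 0 a. Proof. by rewrite /eigsp ab0 scale0r. Qed.
Lemma minus_ab v : eig a eta v -> eig b eta v.
Proof. exact: minus_transfer ha hb Hfa Hfb. Qed.
Lemma minus_ba v : eig b eta v -> eig a eta v.
Proof. exact: minus_transfer hb ha Hfb Hfa. Qed.

Lemma jdec v : exists al be z n, eig a 0 z /\ eig b 0 z /\ eig a eta n /\
  v = al *: a + be *: b + z + n.
Proof.
case: (ax_dec ha v) => al [v0 [n [hv0 [hn ev]]]].
have : Aplus mul b v0.
  apply: (plus_transfer ha hb Hfa Hfb); have := Aplus_of 0 ha hv0; by rewrite scale0r add0r.
case/(Aplus_dec hb) => be [z [hz ev0]].
exists al, be, z, n; split => //.
  have -> : z = v0 - be *: b by rewrite ev0 addrAC subrr add0r.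
  by apply: eigB => //; apply: eigZ; apply: eig_ab.
split => //; by rewrite ev ev0 addrA.
Qed.

Lemma juniq al be z n al' be' z' n' : eig a 0 z -> eig b 0 z -> eig a eta n ->
  eig a 0 z' -> eig b 0 z' -> eig a eta n' ->
  al *: a + be *: b + z + n = al' *: a + be' *: b + z' + n' ->
  [/\ al = al', be = be', z = z' & n = n'].
Proof.
move=> hza hzb hn hza' hzb' hn' E.
have E' : al *: a + (be *: b + z) + n = al' *: a + (be' *: b + z') + n' by rewrite !addrA.
have hab := eig_ab.
case: (ax_uniqk ha a0 _ hn _ hn' E'); try by (apply: eigD => //; apply: eigZ).
move=> -> [E2 ->].
have E2' : be *: b + z + 0 = be' *: b + z' + 0 by rewrite !addr0.
by case: (ax_uniqk hb b0 hzb (eig0 _ _) hzb' (eig0 _ _) E2') => -> [-> _].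
Qed.

Lemma path_inv x z : graph_path mul S x z -> x = z \/ exists y, adj mul x y /\ graph_path mul S y z.
Proof. by case => [y _|x' y z' _ hh p]; [left|right; exists y]. Qed.
Lemma path_start x z : graph_path mul S x z -> S x.
Proof. by case. Qed.

Lemma neighbor : exists c, S c /\ c <> a /\ mul a c <> 0.
Proof.
case: (path_inv (Hconn Sa Sb)) => [//|[y [[hne hm] p]]].
by exists y; split; [exact: path_start p | split => // e; apply: hne].
Qed.

Lemma nbr0 x y phi y0 : axis x -> x != 0 -> axis y -> y <> x -> eig x 0 y0 ->
  y = phi *: x + y0 -> mul x y = 0.
Proof.
move=> hx hx0 hy hne h0 ey.
have Em : mul x y = phi *: x.
  by rewrite ey; mexp; rewrite ax_idem // (mulC x y0) h0 scale0r addr0.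
have [p0|hp] := eqVneq phi 0; first by rewrite Em p0 scale0r.
have E : phi *: x + y0 + 0 = (phi * phi) *: x + mul y0 y0 + 0.
  rewrite !addr0 -ey -{1}(ax_idem hy) {1 2}ey; mexp; rewrite ax_idem // (mulC x y0) h0; lin.
case: (ax_uniqk hx hx0 h0 (eig0 _ _) (f00 hx h0 h0) (eig0 _ _) E) => El _.
have l1 : phi = 1.
  by move: El => /(congr1 (fun t => t / phi)) /=; rewrite mulfK // divff.
exfalso; apply: hne; apply/esym/(ax_one hy hx0 (ax_idem hx)).
by rewrite /eigsp Em l1 scale1r.
Qed.

Lemma eta_half : eta = h.
Proof.
have [//|hne] := eqVneq eta h.
exfalso.
case: neighbor => c [Sc [cna mac]].
have hc := HS Sc.
have c0 : c != 0 by apply/eqP => e; apply: mac; rewrite e mul0r.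
case: (jdec c) => al [be [z [n [hza [hzb [hn ec]]]]]].
have hnb := minus_ab hn.
have ec1 : c = al *: a + (be *: b + z) + n by rewrite ec !addrA.
have ec2 : c = be *: b + (al *: a + z) + n by rewrite ec; lin.
have h01 : eig a 0 (be *: b + z) by apply: eigD => //; apply: eigZ; apply: eig_ab.
have h02 : eig b 0 (al *: a + z) by apply: eigD => //; apply: eigZ; apply: eig_ba.
have n0 : n != 0.
  apply/eqP => n0; apply: mac; apply: (nbr0 ha a0 hc cna h01).
  by rewrite ec1 n0 addr0.
have k1 : 1 - 2%:R * eta != 0.
  apply: contra hne; rewrite subr_eq0 => /eqP e; apply/eqP.
  have -> : eta = (2%:R * eta) / 2%:R by field.
  by rewrite -e mul1r.
case: (ax_dec hc a) => ps [a1 [an [ha1 [han ea]]]].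
case: (ax_dec hc b) => ps' [b1 [bn [hb1 [hbn eb]]]].
case: (PF ha hc a0 c0 h01 hn ec1 ha1 han ea) => eps Eb1 _ _ _.
case: (PF hb hc b0 c0 h02 hnb ec2 hb1 hbn eb) => eps' Eb2 _ _ _.
have Eal : al = eta * h.
  move/(scal_inj n0): Eb1 => E1; apply: (mulfI k1).
  have -> : (1 - 2%:R * eta) * al = (1 - eta) * al - eta * al by ring.
  by rewrite -E1; field.
have Ebe : be = eta * h.
  move/(scal_inj n0): Eb2 => E1; apply: (mulfI k1).
  have -> : (1 - 2%:R * eta) * be = (1 - eta) * be - eta * be by ring.
  by rewrite -E1; field.
have K1 : (eta * h) *: a + eta *: n = (eta * h) *: c + eta *: an.
  have <- : mul a c = (eta * h) *: a + eta *: n by rewrite {1}ec1 (ax_mulx ha) // Eal.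
  by rewrite mulC {1}ea (ax_mulx hc) // -eps Eal.
have K2 : (eta * h) *: b + eta *: n = (eta * h) *: c + eta *: bn.
  have <- : mul b c = (eta * h) *: b + eta *: n by rewrite {1}ec2 (ax_mulx hb) // Ebe.
  by rewrite mulC {1}eb (ax_mulx hc) // -eps' Ebe.
have K : eta *: (h *: (a - b)) = eta *: (an - bn).
  have -> : eta *: (h *: (a - b)) = ((eta * h) *: a + eta *: n) - ((eta * h) *: b + eta *: n) by lin.
  rewrite K1 K2; lin.
have K' : a - b = 2%:R *: (an - bn).
  by rewrite -(scalerI He0 K) scalerA divff // scale1r.
have E : 0 *: c + (a1 - b1) + (an - bn) = 0 *: c + 0 + 2%:R *: (an - bn).
  rewrite -K' [in RHS]ea [in RHS]eb -eps -eps' Eal Ebe; lin.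
case: (ax_uniq hc (eigB ha1 hb1) (eigB han hbn) (eig0 _ _) (eigZ _ (eigB han hbn)) E).
move=> _ [_ E3].
have : an - bn = 0 by rewrite [LHS](_ : _ = 2%:R *: (an - bn) - (an - bn)); [rewrite -E3 subrr | lin].
move=> e0; apply: Hab; apply/eqP; rewrite -subr_eq0; apply/eqP; by rewrite K' e0 scaler0.
Qed.


Definition good s := exists al be n, eig a eta n /\ s = al *: a + be *: b + n.
Definition bad s := eig a 0 s /\ eig b 0 s.

Lemma plus_minus0 x u : axis x -> Aplus mul x u -> eig x eta u -> u = 0.
Proof.
move=> hx; case/(Aplus_dec hx) => k [u0 [h0 ->]] hn.
have E : k *: x + u0 + 0 = 0 *: x + 0 + (k *: x + u0) by lin.
by case: (ax_uniq hx h0 (eig0 _ _) (eig0 _ _) hn E) => _ [_ <-].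
Qed.

Lemma two_h : 2%:R * h = 1. Proof. by rewrite divff. Qed.

Lemma classify s : S s -> good s \/ bad s.
Proof.
move=> Ss; have hs := HS Ss.
have [s0|s0] := eqVneq s 0.
  by left; exists 0, 0, 0; split; [exact: eig0 | rewrite s0 !scale0r !addr0].
case: (jdec s) => al [be [z [n [hza [hzb [hn es]]]]]].
have hnb := minus_ab hn.
have ec1 : s = al *: a + (be *: b + z) + n by rewrite es !addrA.
have ec2 : s = be *: b + (al *: a + z) + n by rewrite es; lin.
have h01 : eig a 0 (be *: b + z) by apply: eigD => //; apply: eigZ; apply: eig_ab.
have h02 : eig b 0 (al *: a + z) by apply: eigD => //; apply: eigZ; apply: eig_ba.
have [z0|z0] := eqVneq z 0.
  by left; exists al, be, n; split => //; rewrite es z0 addr0.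
case: (ax_dec hs a) => ps [a1 [an [ha1 [han ea]]]].
case: (ax_dec hs b) => ps' [b1 [bn [hb1 [hbn eb]]]].
case: (PF ha hs a0 s0 h01 hn ec1 ha1 han ea) => _ _ Ec1 Ed1 _.
case: (PF hb hs b0 s0 h02 hnb ec2 hb1 hbn eb) => _ _ Ec2 Ed2 _.
rewrite eta_half in Ec1 Ec2 Ed1 Ed2.
have hzz : eig a 0 (mul z z) := f00 ha hza hza.
have hzzb : eig b 0 (mul z z) := f00 hb hzb hzb.
have mbz : mul b z = 0 by rewrite mulC hzb scale0r.
have maz : mul a z = 0 by rewrite mulC hza scale0r.
have Q1 : (be * be) *: b + mul z z + 0 = ((1 - al) * be) *: b + (1 - al) *: z + 0.
  have E : h *: (be *: b + z - mul (be *: b + z) (be *: b + z)) = (h * al) *: (be *: b + z).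
    by rewrite Ec1; congr (_ *: _); field.
  have E2 : be *: b + z - mul (be *: b + z) (be *: b + z) = al *: (be *: b + z).
    by apply: (scalerI (invr_neq0 H2)); rewrite E scalerA.
  have : mul (be *: b + z) (be *: b + z) = (be *: b + z) - al *: (be *: b + z).
    by rewrite -E2; lin.
  move=> E3; have -> : (be*be) *: b + mul z z + 0 = mul (be*:b+z) (be*:b+z).
    by mexp; rewrite (ax_idem hb) mbz (mulC z b) mbz; lin.
  rewrite E3; lin.
case: (ax_uniqk hb b0 hzzb (eig0 _ _) (eigZ _ hzb) (eig0 _ _) Q1) => _ [Z1 _].
have Q2 : (al * al) *: a + mul z z + 0 = ((1 - be) * al) *: a + (1 - be) *: z + 0.
  have E : h *: (al *: a + z - mul (al *: a + z) (al *: a + z)) = (h * be) *: (al *: a + z).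
    by rewrite Ec2; congr (_ *: _); field.
  have E2 : al *: a + z - mul (al *: a + z) (al *: a + z) = be *: (al *: a + z).
    by apply: (scalerI (invr_neq0 H2)); rewrite E scalerA.
  have : mul (al *: a + z) (al *: a + z) = (al *: a + z) - be *: (al *: a + z).
    by rewrite -E2; lin.
  move=> E3; have -> : (al*al) *: a + mul z z + 0 = mul (al*:a+z) (al*:a+z).
    by mexp; rewrite (ax_idem ha) maz (mulC z a) maz; lin.
  rewrite E3; lin.
case: (ax_uniqk ha a0 hzz (eig0 _ _) (eigZ _ hza) (eig0 _ _) Q2) => Al [Z2 _].
have Eab : al = be.
  have : (1 - al) *: z = (1 - be) *: z by rewrite -Z1 -Z2.
  move/(scal_inj z0) => e; by rewrite -[al]opprK -[be]opprK -(addKr 1 (- al)) e addKr.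
rewrite -Eab in Al Ed2.
have [al0|al0] := eqVneq al 0.
  have Mas : mul a s = eta *: n by rewrite {1}ec1 (ax_mulx ha) // al0 scale0r add0r.
  have Mbs : mul b s = eta *: n by rewrite {1}ec2 (ax_mulx hb) // -Eab al0 scale0r add0r.
  have e0 : eig s 0 (a - b) by rewrite /eigsp mulBl Mas Mbs subrr scale0r.
  have e1 := f00 hs e0 e0.
  have : mul (a - b) (a - b) = a + b.
    mexp; rewrite (ax_idem ha) (ax_idem hb) ab0 ba0; lin.
  move=> E; move: e1; rewrite E /eigsp mulDl Mas Mbs scale0r -scalerDl.
  have -> : eta + eta = 1 by rewrite eta_half; field.
  rewrite scale1r => n0.
  right; have -> : s = z by rewrite es -Eab al0 n0 !scale0r !add0r addr0.
  by split.
exfalso.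
have alh : al = h.
  have e1 : al = 1 - al by apply: (mulIf al0); rewrite Al.
  have e2 : 2%:R * al = 1.
    have -> : 2%:R * al = al + al by ring.
    by rewrite {2}e1 addrC subrK.
  by apply: (mulfI H2); rewrite e2 divff.
have mbn : mul b n = h *: n by rewrite mulC hnb eta_half.
have mzn : mul z n = 0.
  move: Ed1; mexp; rewrite mbn -Eab alh => e.
  have -> : mul z n = (h - h * h) *: n - h *: (h *: n) by rewrite -e; lin.
  rewrite scalerA -scalerBl; have -> : h - h * h - h * h = 0 by field.
  by rewrite scale0r.
have mzs : mul z s = h *: z.
  rewrite es; mexp; rewrite (mulC z a) maz (mulC z b) mbz mzn Z1 alh.
  have -> : 1 - h = h by field.
  lin.
have ezs0 : eig s eta z by rewrite /eigsp mzs eta_half.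
have ezs : eig s eta ((1 - al) *: z) by apply: eigZ.
have hz' : (1 - al) *: z = 0.
  by apply: (plus_minus0 hs _ ezs); rewrite -Z1; exact: (fmm hs ezs0 ezs0).
move/eqP: hz'; rewrite scaler_eq0 (negbTE z0) orbF alh.
have -> : 1 - h = h by field.
by rewrite invr_eq0 (negbTE H2).
Qed.


Lemma eh : eta = h. Proof. exact: eta_half. Qed.

Lemma mul_a_n n : eig a eta n -> mul a n = eta *: n. Proof. by move=> hn; rewrite mulC hn. Qed.
Lemma mul_b_n n : eig a eta n -> mul b n = eta *: n. Proof. by move=> hn; rewrite mulC (minus_ab hn). Qed.

Lemma prod_form al be n al' be' n' : eig a eta n -> eig a eta n' ->
  mul (al *: a + be *: b + n) (al' *: a + be' *: b + n') =
  (al * al') *: a + (be * be') *: b + (eta * (al + be)) *: n' + (eta * (al' + be')) *: n + mul n n'.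
Proof.
move=> hn hn'; mexp.
rewrite (ax_idem ha) (ax_idem hb) ab0 ba0 (mul_a_n hn') (mul_b_n hn').
rewrite (mulC n a) (mulC n b) (mul_a_n hn) (mul_b_n hn); lin.
Qed.

Lemma e_n n : eig a eta n -> mul (a + b) n = n.
Proof.
move=> hn; rewrite mulDl (mul_a_n hn) (mul_b_n hn) -scalerDl.
have -> : eta + eta = 1 by rewrite eh; field.
by rewrite scale1r.
Qed.

Lemma e_good s : good s -> mul (a + b) s = s.
Proof.
case=> al [be [n [hn ->]]].
rewrite mulDr (e_n hn); congr (_ + _).
mexp; rewrite (ax_idem ha) (ax_idem hb) ab0 ba0; lin.
Qed.

Lemma e_plus s : S s -> good s -> exists u0, eig s 0 u0 /\ a + b = 1 *: s + u0.
Proof.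
move=> Ss gs; exists (a + b - s); split; last by lin.
by rewrite /eigsp mulBl (e_good gs) (ax_idem (HS Ss)) subrr scale0r.
Qed.

Lemma seress_e s y : S s -> good s -> mul s (mul (a + b) y) = mul (a + b) (mul s y).
Proof.
move=> Ss gs; case: (e_plus Ss gs) => u0 [h0 e]; rewrite e; exact: seress (HS Ss) h0.
Qed.

Lemma good_bad s t : S s -> good s -> bad t -> mul s t = 0.
Proof.
move=> Ss gs [hta htb].
have E := seress_e t Ss gs.
have et : mul (a + b) t = 0 by rewrite mulDl (mulC a) (mulC b) hta htb !scale0r addr0.
rewrite et mul0r in E.
case: gs => al [be [n [hn es]]].
have Est : mul s t = mul t n.
  rewrite es; mexp; rewrite (mulC a t) (mulC b t) hta htb !scale0r !scaler0 !add0r mulC //.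
have htn : eig a eta (mul t n) by apply: f0n ha hta hn.
by rewrite Est -(e_n htn) -Est -E.
Qed.

Lemma good_a : good a.
Proof. by exists 1, 0, 0; split; [exact: eig0 | lin]. Qed.

Lemma path_good x y : graph_path mul S x y -> good x -> good y.
Proof.
elim=> // x' y' z' Sx [hne hm] p IH gx; apply: IH.
case: (classify (path_start p)) => // bt; exfalso; apply: hm.
exact: good_bad Sx gx bt.
Qed.

Lemma all_good s : S s -> good s.
Proof. by move=> Ss; apply: (path_good (Hconn Sa Ss)); exact: good_a. Qed.

Inductive Sp : A -> Prop :=
| Sp_S x : S x -> Sp x
| Sp_0 : Sp 0
| Sp_lin k x y : Sp x -> Sp y -> Sp (k *: x + y).

Lemma Sp_scale k x : Sp x -> Sp (k *: x).
Proof. by move=> hx; rewrite -[k *: x]addr0; apply: Sp_lin => //; exact: Sp_0. Qed.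
Lemma Sp_add x y : Sp x -> Sp y -> Sp (x + y).
Proof. by move=> hx hy; rewrite -[x]scale1r; apply: Sp_lin. Qed.

Lemma nSp s al be n : S s -> s = al *: a + be *: b + n -> Sp n.
Proof.
move=> Ss es; have -> : n = s + ((- al) *: a + (- be) *: b) by rewrite es; lin.
apply: Sp_add; first exact: Sp_S.
by apply: Sp_add; apply: Sp_scale; apply: Sp_S.
Qed.

Lemma nn_form s s' al be n al' be' n' : S s -> S s' ->
  eig a eta n -> s = al *: a + be *: b + n ->
  eig a eta n' -> s' = al' *: a + be' *: b + n' ->
  exists p q, mul n n' = p *: a + q *: b.
Proof.
move=> Ss Ss' hn es hn' es'.
have E := seress_e s' Ss (all_good Ss).
rewrite (e_good (all_good Ss')) in E.
have hu := fmm ha hn hn'.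
case: (jdec (mul n n')) => p [q [z [m [hza [hzb [hm eu]]]]]].
case: (Aplus_dec ha hu) => k [u0 [hu0 eu']].
have E1 : p *: a + (q *: b + z) + m = k *: a + u0 + 0 by rewrite !addr0 -eu' eu !addrA.
case: (ax_uniqk ha a0 _ hm hu0 (eig0 _ _) E1); first by apply: eigD => //; apply: eigZ; apply: eig_ab.
move=> _ [_ m0].
have Eu : mul (a + b) (mul n n') = p *: a + q *: b.
  rewrite eu m0 addr0; mexp; rewrite (ax_idem ha) (ax_idem hb) ab0 ba0.
  rewrite (mulC a z) (mulC b z) hza hzb; lin.
have Es : mul (a + b) (mul s s') = mul s s' by [].
move: E; rewrite es es' prod_form // !mulDr !mulZr (e_n hn) (e_n hn') Eu.
rewrite mulDl (ax_idem ha) ba0 mulDl ab0 (ax_idem hb).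
move=> E; exists p, q.
have : p *: a + q *: b = mul n n'.
  apply: (addrI ((al * al') *: a + (be * be') *: b + (eta * (al + be)) *: n' + (eta * (al' + be')) *: n)).
  move: E; rewrite !scalerDr !scaler0 !addr0 !add0r => E.
  by rewrite E.
by move=> ->.
Qed.


Lemma good_facts s al be n : S s -> eig a eta n -> s = al *: a + be *: b + n -> n != 0 ->
  al + be = 1 /\ mul n n = (al - al ^+ 2) *: a + (be - be ^+ 2) *: b.
Proof.
move=> Ss hn es n0; have hs := HS Ss.
have hbb : eig a 0 (be *: b) by apply: eigZ; apply: eig_ab.
have s0 : s != 0.
  apply/eqP => s0; have E : 0 *: a + 0 *: b + 0 + 0 = al *: a + be *: b + 0 + n.
    by rewrite (_ : al *: a + be *: b + 0 + n = s); [rewrite s0; lin | rewrite es; lin].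
  by case: (juniq (eig0 _ _) (eig0 _ _) (eig0 _ _) (eig0 _ _) (eig0 _ _) hn E) => _ _ _ e; move: n0; rewrite -e eqxx.
have es1 : s = al *: a + be *: b + n by [].
case: (ax_dec hs a) => ps [a1 [an [ha1 [han ea]]]].
case: (PF ha hs a0 s0 hbb hn es1 ha1 han ea) => _ _ _ Ed Ee.
split.
  move: Ed; rewrite mulZl (mul_b_n hn) scalerA eh => /(scal_inj n0) e.
  apply: (mulIf (invr_neq0 H2)); rewrite mulrDl e; ring.
rewrite Ee mulZl mulZr (ax_idem hb); lin.
Qed.

Lemma nn_sym s s' al be n al' be' n' : S s -> S s' ->
  eig a eta n -> s = al *: a + be *: b + n ->
  eig a eta n' -> s' = al' *: a + be' *: b + n' ->
  exists t, mul n n' = t *: (a + b).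
Proof.
move=> Ss Ss' hn es hn' es'.
case: (nn_form Ss Ss' hn es hn' es') => p [q Enn].
have [n0|n0] := eqVneq n 0; first by exists 0; rewrite n0 mul0l scale0r.
have [n0'|n0'] := eqVneq n' 0; first by exists 0; rewrite n0' mul0r scale0r.
case: (good_facts Ss hn es n0) => Hs Enn1.
case: (good_facts Ss' hn' es' n0') => Hs' _.
have ebe : be = 1 - al by rewrite -Hs; ring.
have ebe' : be' = 1 - al' by rewrite -Hs'; ring.
rewrite ebe in es Enn1; rewrite ebe' in es'.
have hs := HS Ss.
case: (ax_dec hs s') => ps [x0 [xn [hx0 [hxn ex]]]].
have AFe := AF hs hx0 hxn ex.
set A1 := al * al' + p.
set B1 := (1 - al) * (1 - al') + q.
have M1 : mul s s' = A1 *: a + B1 *: b + h *: n' + h *: n.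
  rewrite es es' prod_form // Enn eh /A1 /B1; lin.
have Msa : mul s a = al *: a + h *: n.
  rewrite es; mexp; rewrite (ax_idem ha) ba0 hn eh; lin.
have Msb : mul s b = (1 - al) *: b + h *: n.
  rewrite es; mexp; rewrite (ax_idem hb) ab0 (mulC n b) (mul_b_n hn) eh; lin.
have Msn' : mul s n' = h *: n' + (p *: a + q *: b).
  rewrite es; mexp; rewrite Enn (mul_a_n hn') (mul_b_n hn') eh; lin.
have Msn : mul s n = h *: n + ((al - al ^+ 2) *: a + ((1 - al) - (1 - al) ^+ 2) *: b).
  rewrite es; mexp; rewrite Enn1 (mul_a_n hn) (mul_b_n hn) eh; lin.
rewrite M1 in AFe; mexpin AFe; rewrite Msa Msb Msn' Msn eh in AFe.
set D := (1 - h) * ps.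
set Ca := A1 * al + h * p + h * (al - al ^+ 2) - h * A1.
set Cb := B1 * (1 - al) + h * q + h * ((1 - al) - (1 - al) ^+ 2) - h * B1.
have Eq : Ca *: a + Cb *: b + 0 + (h * (A1 + B1)) *: n = (D * al) *: a + (D * (1 - al)) *: b + 0 + D *: n.
  have -> : (D * al) *: a + (D * (1 - al)) *: b + 0 + D *: n = D *: (al *: a + (1 - al) *: b + n) by lin.
  rewrite -es -AFe /Ca /Cb; lin.
have hnn : eig a eta ((h * (A1 + B1)) *: n) by apply: eigZ.
case: (juniq (eig0 _ _) (eig0 _ _) hnn (eig0 _ _) (eig0 _ _) (eigZ D hn) Eq) => Ea Eb _ En.
have ED : D = h * (A1 + B1) by apply: (scal_inj n0); rewrite En.
rewrite ED in Ea Eb.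
have Fa : h * al * (p - q) = 0.
  rewrite (_ : h * al * (p - q) = Ca - h * (A1 + B1) * al); first by rewrite Ea subrr.
  by rewrite /Ca /A1 /B1; field.
have Fb : h * (1 - al) * (q - p) = 0.
  rewrite (_ : h * (1 - al) * (q - p) = Cb - h * (A1 + B1) * (1 - al)); first by rewrite Eb subrr.
  by rewrite /Cb /A1 /B1; field.
have Epq : p = q.
  apply/eqP; rewrite -subr_eq0; apply/eqP.
  rewrite (_ : p - q = 2%:R * (h * al * (p - q)) - 2%:R * (h * (1 - al) * (q - p))); last by field.
  by rewrite Fa Fb; ring.
by exists p; rewrite Enn Epq scalerDr.
Qed.


Lemma Sp_a : Sp a. Proof. exact: Sp_S. Qed.
Lemma Sp_b : Sp b. Proof. exact: Sp_S. Qed.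

Lemma prod_Sp s s' : S s -> S s' -> Sp (mul s s').
Proof.
move=> Ss Ss'; case: (all_good Ss) => al [be [n [hn es]]].
case: (all_good Ss') => al' [be' [n' [hn' es']]].
case: (nn_sym Ss Ss' hn es hn' es') => t Et.
have Sn := nSp Ss es; have Sn' := nSp Ss' es'.
rewrite es es' prod_form // Et.
repeat apply: Sp_add; try apply: Sp_scale => //; try exact: Sp_a; try exact: Sp_b.
by apply: Sp_add; [exact: Sp_a | exact: Sp_b].
Qed.

Lemma Sp_mul x y : Sp x -> Sp y -> Sp (mul x y).
Proof.
elim=> [s Ss| |k x1 x2 _ IH1 _ IH2].
- elim=> [s' Ss'| |k y1 y2 _ IH1 _ IH2]; first exact: prod_Sp.
  + by rewrite mul0r; exact: Sp_0.
  + by rewrite mulDr mulZr; apply: Sp_lin.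
- by move=> _; rewrite mul0l; exact: Sp_0.
- by move=> hy; rewrite mulDl mulZl; apply: Sp_lin; [apply: IH1 | apply: IH2].
Qed.

Lemma Sp_all x : Sp x.
Proof.
apply: (Hgen (P := Sp)); last by move=> y; exact: Sp_S.
split; first exact: Sp_0.
split; [move=> k u v; exact: Sp_lin | exact: Sp_mul].
Qed.

Lemma e_id x : mul (a + b) x = x.
Proof.
elim: (Sp_all x) => [s Ss| |k x1 x2 _ IH1 _ IH2].
- exact: e_good (all_good Ss).
- exact: mul0r.
- by rewrite mulDr mulZr IH1 IH2.
Qed.

Lemma dec2 x : exists al be n, eig a eta n /\ x = al *: a + be *: b + n.
Proof.
case: (jdec x) => al [be [z [n [hza [hzb [hn ex]]]]]].
exists al, be, n; split => //.
have := e_id x; rewrite {1}ex mulDr (e_n hn) mulDr.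
have -> : mul (a + b) z = 0 by rewrite mulDl (mulC a) (mulC b) hza hzb !scale0r addr0.
have -> : mul (a + b) (al *: a + be *: b) = al *: a + be *: b.
  by mexp; rewrite (ax_idem ha) (ax_idem hb) ab0 ba0; lin.
by rewrite addr0 => ->.
Qed.

Lemma duniq al be n al' be' n' : eig a eta n -> eig a eta n' ->
  al *: a + be *: b + n = al' *: a + be' *: b + n' -> [/\ al = al', be = be' & n = n'].
Proof.
move=> hn hn' E.
have E' : al *: a + be *: b + 0 + n = al' *: a + be' *: b + 0 + n' by rewrite !addr0.
by case: (juniq (eig0 _ _) (eig0 _ _) hn (eig0 _ _) (eig0 _ _) hn' E') => -> -> _ ->.
Qed.

Definition NP x y := forall al be n al' be' n', eig a eta n -> x = al *: a + be *: b + n ->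
  eig a eta n' -> y = al' *: a + be' *: b + n' -> exists t, mul n n' = t *: (a + b).

Lemma NP_sym x y : NP x y -> NP y x.
Proof.
move=> H al be n al' be' n' hn ex hn' ey.
by case: (H _ _ _ _ _ _ hn' ey hn ex) => t Et; exists t; rewrite mulC.
Qed.

Lemma NP_0 y : NP 0 y.
Proof.
move=> al be n al' be' n' hn ex hn' ey; exists 0.
have E : 0 *: a + 0 *: b + 0 = al *: a + be *: b + n by rewrite -ex; lin.
by case: (duniq (eig0 _ _) hn E) => _ _ <-; rewrite mul0l scale0r.
Qed.

Lemma NP_lin k x1 x2 y : NP x1 y -> NP x2 y -> NP (k *: x1 + x2) y.
Proof.
move=> H1 H2' al be n al' be' n' hn ex hn' ey.
case: (dec2 x1) => al1 [be1 [n1 [hn1 e1]]].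
case: (dec2 x2) => al2 [be2 [n2 [hn2 e2]]].
case: (H1 _ _ _ _ _ _ hn1 e1 hn' ey) => t1 Et1.
case: (H2' _ _ _ _ _ _ hn2 e2 hn' ey) => t2 Et2.
have E : al *: a + be *: b + n = (k * al1 + al2) *: a + (k * be1 + be2) *: b + (k *: n1 + n2).
  by rewrite -ex e1 e2; lin.
case: (duniq hn (eig_lin k hn1 hn2) E) => _ _ ->.
by exists (k * t1 + t2); rewrite mulDl mulZl Et1 Et2; lin.
Qed.

Lemma NP_all x y : NP x y.
Proof.
elim: (Sp_all x) y => [s Ss| |k x1 x2 _ IH1 _ IH2] y.
- elim: (Sp_all y) => [s' Ss'| |k y1 y2 _ IH1 _ IH2].
  + move=> al be n al' be' n' hn ex hn' ey; exact: nn_sym Ss Ss' hn ex hn' ey.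
  + by apply: NP_sym; apply: NP_0.
  + by apply: NP_sym; apply: NP_lin; apply: NP_sym.
- exact: NP_0.
- by apply: NP_lin.
Qed.

Lemma nn_all n n' : eig a eta n -> eig a eta n' -> exists t, mul n n' = t *: (a + b).
Proof.
move=> hn hn'; have H := @NP_all n n'.
by apply: (H 0 0 n 0 0 n') => //; lin.
Qed.


Lemma main_result : eta = h /\ (forall x, mul (a + b) x = x /\ mul x (a + b) = x) /\
  exists (V : lmodType F) (B : V -> V -> F) (phi : A -> F * V),
    symbilin B /\ iso_J mul B phi.
Proof.
split; first exact: eh.
split; first by move=> x; split; [exact: e_id | rewrite mulC; exact: e_id].
have D : forall x, {p : F * F * A | eig a eta p.2 /\ x = p.1.1 *: a + p.1.2 *: b + p.2}.
  move=> x; apply: constructive_indefinite_description.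
  by case: (dec2 x) => al [be [n [hn ex]]]; exists (al, be, n).
pose ca x := (sval (D x)).1.1.
pose cb x := (sval (D x)).1.2.
pose np x := (sval (D x)).2.
have hnp : forall x, eig a eta (np x) by move=> x; exact: (proj1 (svalP (D x))).
have ex : forall x, x = ca x *: a + cb x *: b + np x by move=> x; exact: (proj2 (svalP (D x))).
have cuniq : forall x al be n, eig a eta n -> x = al *: a + be *: b + n ->
    [/\ ca x = al, cb x = be & np x = n].
  by move=> x al be n hn e; apply: duniq (hnp x) hn _; rewrite -ex.
have hlin : forall k x y, [/\ ca (k *: x + y) = k * ca x + ca y,
     cb (k *: x + y) = k * cb x + cb y & np (k *: x + y) = k *: np x + np y].
  move=> k x y; apply: cuniq; first exact: eig_lin.
  by rewrite [in LHS](ex x) [in LHS](ex y); lin.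
pose l x := ca x + cb x.
have hl : forall k x y, l (k *: x + y) = k * l x + l y.
  by move=> k x y; rewrite /l; case: (hlin k x y) => -> -> _; ring.
pose L := LinF hl.
pose e := a + b.
have ce : [/\ ca e = 1, cb e = 1 & np e = 0].
  by apply: cuniq; [exact: eig0 | rewrite /e; lin].
have le : l e = 2%:R by case: ce => c1 c2 _; rewrite /l c1 c2.
pose t x := h * l x.
have kp : forall x, (- t x) *: e + x \in kerp L.
  by move=> x; rewrite unfold_in /= hl le; apply/eqP; rewrite /t; field.
pose phi x : F * kerT L := (t x, KerT (kp x)).
pose B (v w : kerT L) := ca (mul (kval v) (kval w)).
have lk : forall v : kerT L, l (kval v) = 0 by move=> v; exact: (kval0 v).
have kform : forall v, l v = 0 -> v = ca v *: (a - b) + np v.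
  move=> v lv; have ecb : cb v = - ca v by apply/eqP; rewrite -subr_eq0 opprK addrC; apply/eqP.
  by rewrite {1}(ex v) ecb; lin.
have mab : forall n, eig a eta n -> mul (a - b) n = 0.
  by move=> n hn; rewrite mulBl (mul_a_n hn) (mul_b_n hn) subrr.
have mvw : forall v w, l v = 0 -> l w = 0 -> mul v w = ca (mul v w) *: e.
  move=> v w lv lw.
  have [c Ec] : exists c, mul v w = c *: e.
    case: (nn_all (hnp v) (hnp w)) => t0 Et0.
    exists (ca v * ca w + t0).
    rewrite [in LHS](kform v lv) [in LHS](kform w lw); mexp.
    rewrite (ax_idem ha) (ax_idem hb) ab0 ba0 (mul_a_n (hnp w)) (mul_b_n (hnp w)).
    rewrite (mulC (np v) a) (mulC (np v) b) (mul_a_n (hnp v)) (mul_b_n (hnp v)) Et0 /e; lin.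
  rewrite Ec; congr (_ *: _).
  by case: (cuniq (c *: e) c c 0 (eig0 _ _)) => //; rewrite /e; lin.
have emul : forall v, mul e v = v by move=> v; exact: e_id.
have emul' : forall v, mul v e = v by move=> v; rewrite mulC; exact: e_id.
exists (kerT L), B, phi.
split.
  split.
    move=> k u v w; rewrite /B kvalD kvalZ mulDl mulZl.
    by case: (hlin k (mul (kval u) (kval w)) (mul (kval v) (kval w))).
  by move=> u v; rewrite /B mulC.
have lv0 : forall x, l ((- t x) *: e + x) = 0.
  by move=> x; have := kp x; rewrite unfold_in /= => /eqP.
have tlin : forall k x y, t (k *: x + y) = k * t x + t y by move=> k x y; rewrite /t hl; ring.
split.
  exists (fun p : F * kerT L => p.1 *: e + kval p.2).
    by move=> x /=; lin.
  move=> [t0 v] /=.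
  have Et : t (t0 *: e + kval v) = t0 by rewrite /t hl le lk addr0; field.
  rewrite /phi; congr pair => //; apply: kval_inj => /=; rewrite Et; lin.
split.
  move=> k x y; rewrite /phi /=; congr pair; first exact: tlin.
  by apply: kval_inj; rewrite kvalD kvalZ /= tlin; lin.
have mulE : forall p q u w, l u = 0 -> l w = 0 ->
    mul (p *: (a + b) + u) (q *: (a + b) + w) = (p * q + ca (mul u w)) *: (a + b) + (p *: w + q *: u).
  move=> p q u w lu lw; rewrite mulDl !mulDr !mulZl !mulZr !e_id (mulC u (a + b)) e_id.
  rewrite [in LHS](mvw u w lu lw) /e; lin.
have te : t (a + b) = 1 by rewrite /t -/e le; field.
move=> x y.
have ex' : x = t x *: (a + b) + ((- t x) *: e + x) by rewrite /e; lin.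
have ey' : y = t y *: (a + b) + ((- t y) *: e + y) by rewrite /e; lin.
have Exy : mul x y = (t x * t y + B (phi x).2 (phi y).2) *: (a + b) +
    (t x *: kval (phi y).2 + t y *: kval (phi x).2).
  by rewrite {1}ex' {1}ey' mulE ?lv0.
have l0 : l 0 = 0 by move: (hl (-1) 0 0); rewrite scaler0 addr0 mulN1r addNr => ->.
have lr : forall (p q : F) (u w : kerT L), l (p *: kval u + q *: kval w) = 0.
  by move=> p q u w; rewrite hl -[q *: kval w]addr0 hl !lk l0 !mulr0 !addr0.
have Et : t (mul x y) = t x * t y + B (phi x).2 (phi y).2.
  by rewrite Exy tlin te /t lr; ring.
rewrite /jmul /phi /=; congr pair; first exact: Et.
apply: kval_inj; rewrite kvalD !kvalZ /= Et.
rewrite Exy /e /=; lin.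
Qed.

End Main.

Theorem theoremB (F : fieldType) (A : lmodType F) (mul : A -> A -> A) (eta : F)
  (S : A -> Prop) (a b : A) :
  (2%:R : F) != 0 ->
  eta != 0 -> eta != 1 ->
  comm_algebra mul ->
  (forall x, S x -> is_axis mul eta x) ->
  generates mul S ->
  graph_connected mul S ->
  S a -> S b -> a <> b ->
  (exists f : A -> A, is_tau mul eta a f /\ is_tau mul eta b f /\ exists x, f x <> x) ->
  eta = 2%:R^-1 /\
  (forall x, mul (a + b) x = x /\ mul x (a + b) = x) /\
  exists (V : lmodType F) (B : V -> V -> F) (phi : A -> F * V),
    symbilin B /\ iso_J mul B phi.
Proof.
move=> H2 He0 He1 Hc HS Hgen Hconn Sa Sb Hab [f [Hfa [Hfb Hfx]]].
exact: (main_result H2 He0 He1 Hc HS Hgen Hconn Sa Sb Hab Hfa Hfb Hfx).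
Qed.
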